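(* Define $h:\mathrm{T}^2\times\mathbb{R}^2\to[0,\infty]$ by $$h(\varepsilon,\vartheta):=\sup_{\zeta\in\mathbb{R}^2}\ \sup_{\tau\in\mathbb{R}^2}\Big\{(\varepsilon+\zeta\overset{s}{\otimes}\vartheta):(\tau\otimes\tau)\ \Big|\ (\mathrm{I}+\zeta\otimes\zeta):(\tau\otimes\tau)\le 1\Big\}.$$ Then $h$ equals the gauge $g_{\mathscr{C}}$ of the closed convex set $\mathscr{C}:=\{(\varepsilon,\vartheta)\in\mathrm{T}^2\times\mathbb{R}^2:\ \tfrac14\vartheta\otimes\vartheta+\varepsilon\preceq\mathrm{I}\}$. In particular, for every $\varepsilon\in\mathrm{T}^2$, $\vartheta\in\mathbb{R}^2$: $$h(\varepsilon,\vartheta)\le1\iff \tfrac14\,\vartheta\otimes\vartheta+\varepsilon\preceq\mathrm{I}.$$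
   Context: $\mathrm{T}^2$ denotes symmetric real $2\times2$ matrices; $A:B=\mathrm{tr}(A^\top B)$; $A\preceq B$ means $B-A$ is positive semi-definite; $\mathrm{I}$ is the identity; $a\overset{s}{\otimes}b=\frac12(a\otimes b+b\otimes a)$. For a closed convex set $K$ containing the origin, its gauge is $g_K(y)=\inf\{t\ge0: y\in tK\}$ (with $\inf\emptyset=+\infty$). *)

(* Defs.v *)
From HB Require Import structures.
From mathcomp Require Import all_boot all_order all_algebra.
From mathcomp Require Import all_classical all_reals.
From mathcomp Require Import ereal.
Set Implicit Arguments. Unset Strict Implicit. Unset Printing Implicit Defensive.
Import Order.TTheory GRing.Theory Num.Theory.
Local Open Scope ring_scope.
Local Open Scope classical_set_scope.

Section Defs.
Variable R : realType.

Definition sym2 (A : 'M[R]_2) : Prop := A^T = A.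

Definition frob (A B : 'M[R]_2) : R := \tr (A^T *m B).

Definition outer (a b : 'cV[R]_2) : 'M[R]_2 := a *m b^T.

Definition souter (a b : 'cV[R]_2) : 'M[R]_2 :=
  (2%:R)^-1 *: (outer a b + outer b a).

Definition psd (A : 'M[R]_2) : Prop :=
  forall v : 'cV[R]_2, 0 <= (v^T *m A *m v) 0 0.

Definition loewner_le (A B : 'M[R]_2) : Prop := psd (B - A).

(* h(eps, theta) as a supremum in [-oo, +oo] (it is >= 0 via tau = 0) *)
Definition h (eps : 'M[R]_2) (th : 'cV[R]_2) : \bar R :=
  ereal_sup [set x : \bar R | exists (z t : 'cV[R]_2),
               frob (1%:M + outer z z) (outer t t) <= 1 /\
               x = (frob (eps + souter z th) (outer t t))%:E].

Definition setCC : set ('M[R]_2 * 'cV[R]_2) :=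
  [set p | sym2 p.1 /\
           loewner_le ((4%:R)^-1 *: outer p.2 p.2 + p.1) 1%:M].

(* gauge of a set K of pairs: inf {t >= 0 : y in tK}, inf of empty = +oo *)
Definition gauge (K : set ('M[R]_2 * 'cV[R]_2)) (y : 'M[R]_2 * 'cV[R]_2)
  : \bar R :=
  ereal_inf [set t%:E | t in [set t : R | 0 <= t /\
              exists k, K k /\ y = (t *: k.1, t *: k.2)]].

End Defs.

(* Main.v *)
Require Import Defs.
From HB Require Import structures.
From mathcomp Require Import all_boot all_order all_algebra.
From mathcomp Require Import all_classical all_reals.
From mathcomp Require Import ereal.
From mathcomp Require Import ring lra.
Import Order.TTheory GRing.Theory Num.Theory.
Local Open Scope ring_scope.

Section Aux.
Variable R : realType.
Local Notation i1 := (lift ord0 (ord0 : 'I_1) : 'I_2).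
Definition dt (a b : 'cV[R]_2) : R := a ord0 ord0 * b ord0 ord0 + a i1 ord0 * b i1 ord0.
Definition qf (A : 'M[R]_2) (v : 'cV[R]_2) : R :=
  A ord0 ord0 * v ord0 ord0 * v ord0 ord0 + A i1 ord0 * v i1 ord0 * v ord0 ord0
  + A ord0 i1 * v ord0 ord0 * v i1 ord0 + A i1 i1 * v i1 ord0 * v i1 ord0.

Ltac expand := rewrite /frob /outer /souter /mxtrace /dt /qf;
  do 4! rewrite ?big_ord_recl ?big_ord0 ?mxE /=.

Lemma frob1 z t : frob (1%:M + outer z z) (outer t t) = dt t t + dt z t ^+ 2.
Proof. expand. ring. Qed.

Lemma frob2 eps z th t :
  frob (eps + souter z th) (outer t t) = qf eps t + dt z t * dt th t.
Proof. expand. by field. Qed.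

Lemma psdform a eps th v :
  (v^T *m (1%:M - (a *: outer th th + eps)) *m v) ord0 ord0
  = dt v v - a * dt th v ^+ 2 - qf eps v.
Proof. expand. ring. Qed.

Lemma dtZl a u w : dt (a *: u) w = a * dt u w.
Proof. rewrite /dt !mxE; ring. Qed.
Lemma dtZr a u w : dt w (a *: u) = a * dt w u.
Proof. rewrite /dt !mxE; ring. Qed.
Lemma qfZ a A v : qf A (a *: v) = a ^+ 2 * qf A v.
Proof. rewrite /qf !mxE; ring. Qed.
Lemma qfZm a A v : qf (a *: A) v = a * qf A v.
Proof. rewrite /qf !mxE; ring. Qed.
Lemma qf0 v : qf 0 v = 0.
Proof. rewrite /qf !mxE; ring. Qed.
Lemma dt0 v : dt 0 v = 0.
Proof. rewrite /dt !mxE; ring. Qed.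
End Aux.
Arguments dt {R}.
Arguments qf {R}.

Section Core.
Variable R : realType.
Local Notation i1 := (lift ord0 (ord0 : 'I_1) : 'I_2).

Lemma core (eps : 'M[R]_2) th (c : R) : 0 < c ->
  (forall z t : 'cV[R]_2, dt t t + dt z t ^+ 2 <= 1 ->
      qf eps t + dt z t * dt th t <= c) <->
  (forall v, 0 <= c * dt v v - qf eps v - dt th v ^+ 2 / (4 * c)).
Proof.
move=> c0; split.
- move=> H v.
  set n := dt v v; set b := dt th v; set q := qf eps v.
  have n0 : 0 <= n by rewrite /n /dt; nra.
  have [nz|np] := eqVneq n 0.
    have hv0 : v ord0 ord0 = 0.
      apply/eqP; rewrite -sqrf_eq0; apply/eqP; move: nz; rewrite /n /dt; nra.
    have hv1 : v i1 ord0 = 0.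
      apply/eqP; rewrite -sqrf_eq0; apply/eqP; move: nz; rewrite /n /dt; nra.
    by rewrite /q /b /n /qf /dt hv0 hv1 !(mul0r, mulr0, addr0) subrr expr0n /= mul0r subr0.
  have npos : 0 < n by rewrite lt_def np.
  set k := b / (2 * c).
  have hb : b = 2 * c * k by rewrite /k; field; lra.
  set m := n + k ^+ 2.
  have mpos : 0 < m by rewrite /m; nra.
  set r := Num.sqrt m.
  have rpos : 0 < r by rewrite /r sqrtr_gt0.
  have r2 : r ^+ 2 = m by rewrite /r sqr_sqrtr // ltW.
  set l := r^-1.
  have l2 : l ^+ 2 * m = 1 by rewrite /l exprVn r2 mulVf // gt_eqF.
  have := H ((k / n) *: v) (l *: v).
  rewrite !dtZl !dtZr qfZ -/n -/b -/q.
  have e1 : l * (l * n) + (k / n * (l * n)) ^+ 2 = l ^+ 2 * m.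
    by rewrite /m; field; rewrite gt_eqF.
  rewrite e1 l2 lexx => /(_ isT).
  have e2 : l ^+ 2 * q + k / n * (l * n) * (l * b) = l ^+ 2 * (q + k * b).
    by field; rewrite gt_eqF.
  rewrite e2 => Hc.
  have Hc' : q + k * b <= c * m.
    have : (q + k * b) = (l ^+ 2 * (q + k * b)) * m.
      by rewrite [RHS]mulrAC l2 mul1r.
    by move=> ->; rewrite ler_pM2r.
  have e3 : b ^+ 2 / (4 * c) = c * k ^+ 2 by rewrite hb; field; lra.
  rewrite e3; move: Hc'; rewrite /m hb; nra.
- move=> H z t Ht.
  have := H t.
  set n := dt t t; set b := dt th t; set q := qf eps t; set s := dt z t.
  set k := b / (2 * c).
  have hb : b = 2 * c * k by rewrite /k; field; lra.
  have e3 : b ^+ 2 / (4 * c) = c * k ^+ 2 by rewrite hb; field; lra.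
  rewrite e3 hb => Hv.
  move: Ht; rewrite -/n -/s => Ht.
  have : c * (n + s ^+ 2) <= c by rewrite -[X in _ <= X]mulr1 ler_pM2l.
  have : 0 <= c * (k - s) ^+ 2 by apply: mulr_ge0; [lra | apply: sqr_ge0].
  nra.
Qed.
End Core.

Lemma qfv0 (R : realType) (A : 'M[R]_2) : qf A 0 = 0.
Proof. by rewrite /qf !mxE; ring. Qed.

Lemma h_le (R : realType) (eps : 'M[R]_2) th (c : R) : 0 < c ->
  (h eps th <= c%:E)%E <->
  (forall v, 0 <= c * dt v v - qf eps v - dt th v ^+ 2 / (4 * c)).
Proof.
move=> c0; rewrite -core //; split.
- move=> /ereal_supP H z t Ht.
  have := H (frob (eps + souter z th) (outer t t))%:E.
  rewrite lee_fin frob2; apply; exists z, t; split; last by rewrite frob2.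
  by rewrite frob1.
- move=> H; apply/ereal_supP => y [z [t [Ht ->]]].
  by rewrite lee_fin frob2; apply: H; rewrite -frob1.
Qed.

Lemma h00 (R : realType) : (h (0 : 'M[R]_2) 0 <= 0%:E)%E.
Proof.
apply/ereal_supP => y [z [t [_ ->]]].
by rewrite lee_fin frob2 qf0 dt0 mulr0 addr0.
Qed.

Lemma h_ge0 {R : realType} (eps : 'M[R]_2) th : (0%:E <= h eps th)%E.
Proof.
apply: ereal_sup_ubound; exists 0, 0; split.
  by rewrite frob1 dt0 expr0n /= addr0 ler01.
by rewrite frob2 qfv0 dt0 mul0r addr0.
Qed.

Theorem proposition4p1 (R : realType) :
  (forall (eps : 'M[R]_2) (th : 'cV[R]_2), sym2 eps ->
     h eps th = gauge (@setCC R) (eps, th)) /\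
  (forall (eps : 'M[R]_2) (th : 'cV[R]_2), sym2 eps ->
     ((h eps th <= 1%:E)%E <->
      loewner_le ((4%:R)^-1 *: outer th th + eps) 1%:M)).
Proof.
split; last first.
  move=> eps th _; rewrite h_le ?ltr01 // /loewner_le /psd.
  have E v : 1 * dt v v - qf eps v - dt th v ^+ 2 / (4 * 1)
     = dt v v - 4%:R^-1 * dt th v ^+ 2 - qf eps v by field.
  by split=> H v; move: (H v); rewrite psdform E.
move=> eps th Hs; apply/eqP; rewrite eq_le; apply/andP; split.
- apply: le_ereal_inf_tmp => _ [t [t0 [k [[Hk1 Hk2] Hy]]] <-].
  case: Hy => -> ->.
  have [->|tn0] := eqVneq t 0.
    by rewrite !scale0r; apply: h00.
  have tp : 0 < t by rewrite lt_def tn0.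
  rewrite h_le // => v.
  have := Hk2 v; rewrite psdform qfZm dtZl.
  have -> : t * dt v v - t * qf k.1 v - (t * dt k.2 v) ^+ 2 / (4 * t)
    = t * (dt v v - 4%:R^-1 * dt k.2 v ^+ 2 - qf k.1 v) by field; rewrite gt_eqF.
  by move=> H; apply: mulr_ge0 => //; apply: ltW.
- have := h_ge0 eps th.
  case E: (h eps th) => [r| |]; [ | by move=> _; apply: leey | by [] ].
  rewrite lee_fin => r0.
  apply/lee_addgt0Pr => e e0.
  have tp : 0 < r + e by lra.
  have Hle : (h eps th <= (r + e)%:E)%E by rewrite E lee_fin; lra.
  move: Hle; rewrite h_le // => Hq.
  apply: ereal_inf_lbound; exists (r + e); last by rewrite EFinD.
  split; first lra.
  exists ((r + e)^-1 *: eps, (r + e)^-1 *: th); split; first split.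
  + apply/matrixP => i j; rewrite !mxE /=.
    by have := congr1 (fun M : 'M[R]_2 => M i j) Hs; rewrite /= mxE => ->.
  + move=> v; rewrite /= psdform qfZm dtZl.
    have := Hq v.
    set t := r + e.
    have -> : dt v v - 4%:R^-1 * (t^-1 * dt th v) ^+ 2 - t^-1 * qf eps v
      = t^-1 * (t * dt v v - qf eps v - dt th v ^+ 2 / (4 * t))
      by field; rewrite gt_eqF.
    by move=> H; apply: mulr_ge0 => //; rewrite invr_ge0 ltW.
  + by rewrite /= !scalerA mulfV ?gt_eqF // !scale1r.
Qed.
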